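(* Let $G=(V,E)$ be a finite graph, $q\in\mathbb N$, $\beta\ge0$ and $p=1-e^{-\beta}$. Let $P_{\rm SW}$ be the transition matrix of the Swendsen--Wang dynamics for the $q$-state Potts model on $G$ at inverse temperature $\beta$, and $\tilde P_{\rm SW}$ that of the Swendsen--Wang dynamics for the random-cluster model on $G$ with parameters $p$ and $q$. Then $\lambda(P_{\rm SW})=\lambda(\tilde P_{\rm SW})$.
   Context: For $A\subseteq E$, $c(A)$ is the number of connected components of $(V,A)$; for $\sigma\in\{1,\dots,q\}^V$, $E(\sigma)$ is the set of edges whose endvertices have the same color. Potts measure $\pi(\sigma)=e^{\beta|E(\sigma)|}/Z$; RC measure $\mu(A)\propto(\tfrac{p}{1-p})^{|A|}q^{c(A)}$. $P_{\rm SW}(\sigma,\tau)=(1-p)^{|E(\sigma)|}\sum_{A\subseteq E(\sigma)\cap E(\tau)}(\tfrac{p}{1-p})^{|A|}q^{-c(A)}$ (reversible w.r.t. $\pi$); $\tilde P_{\rm SW}(A,B)=q^{-c(A)}(\tfrac{p}{1-p})^{|B|}\sum_{\sigma}(1-p)^{|E(\sigma)|}\mathbf 1(A\cup B\subseteq E(\sigma))$ (reversible w.r.t. $\mu$). Spectral gap: $\lambda(P)=1-\max\{|\xi|:\xi\text{ eigenvalue of }P,\ \xi\neq1\}$. *)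

(* Defs.v *)
From HB Require Import structures.
From mathcomp Require Import all_boot all_order all_algebra.
From mathcomp Require Import reals sequences exp.
From mathcomp Require Import complex.
Set Implicit Arguments. Unset Strict Implicit. Unset Printing Implicit Defensive.
Import Order.TTheory GRing.Theory Num.Theory.
Local Open Scope ring_scope.

Section Defs.
Variable R : realType.

Definition is_eigenvalue (S : finType) (P : S -> S -> R) (xi : R[i]) : Prop :=
  exists v : S -> R[i], (exists s, v s != 0) /\
    forall s, \sum_(t : S) ((P s t)%:C * v t)%C = (xi * v s)%C.

(* The max of this finite set of reals is taken as [sup]; for the empty set
   this is 0 (sup set0 = 0), i.e. lambda(P) = 1 when 1 is the only eigenvalue. *)
Definition spectral_gap (S : finType) (P : S -> S -> R) : R :=
  1 - sup (fun r : R => exists xi : R[i],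
             [/\ is_eigenvalue P xi, xi != 1 & r = Normc.normc xi]).

Variables (V E : finType) (eu ev : E -> V).

Definition simple_graph : Prop :=
  (forall e, eu e != ev e) /\
  (forall e f, [set eu e; ev e] = [set eu f; ev f] -> e = f).

Definition adjA (A : {set E}) : rel V :=
  fun x y => [exists e in A, ((eu e == x) && (ev e == y)) || ((eu e == y) && (ev e == x))].

Definition ncomp (A : {set E}) : nat :=
  #|[set [set y | connect (adjA A) x y] | x : V]|.

Definition mono_edges (q : nat) (sigma : {ffun V -> 'I_q}) : {set E} :=
  [set e | sigma (eu e) == sigma (ev e)].

Definition P_SW (q : nat) (p : R) (sigma tau : {ffun V -> 'I_q}) : R :=
  (1 - p) ^+ #|mono_edges sigma| *
  \sum_(A : {set E} | A \subset mono_edges sigma :&: mono_edges tau)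
     (p / (1 - p)) ^+ #|A| * (q%:R ^- ncomp A).

Definition P_SW_RC (q : nat) (p : R) (A B : {set E}) : R :=
  q%:R ^- ncomp A * (p / (1 - p)) ^+ #|B| *
  \sum_(sigma : {ffun V -> 'I_q})
     (1 - p) ^+ #|mono_edges sigma| * (A :|: B \subset mono_edges sigma)%:R.

End Defs.

(* Main.v *)
Require Import Defs.
From HB Require Import structures.
From mathcomp Require Import all_boot all_order all_algebra.
From mathcomp Require Import reals sequences exp.
From mathcomp Require Import complex.
From mathcomp Require Import boolp classical_sets.
Import Order.TTheory GRing.Theory Num.Theory.
Set Implicit Arguments. Unset Strict Implicit. Unset Printing Implicit Defensive.
Local Open Scope ring_scope.
Local Open Scope classical_set_scope.

Section Gen.
Variable R : realType.

Lemma eig_swap (S1 S2 : finType) (T : S1 -> S2 -> R) (U : S2 -> S1 -> R) (xi : R[i]) :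
  xi != 0 -> is_eigenvalue (fun s t => \sum_k T s k * U k t) xi ->
  is_eigenvalue (fun a b => \sum_k U a k * T k b) xi.
Proof.
move=> xi0 [v [[s0 vs0] Hv]].
pose w k := \sum_t ((U k t)%:C * v t)%C.
have Hw : forall s, \sum_k ((T s k)%:C%C * w k) = xi * v s.
  move=> s; rewrite -Hv /w.
  under eq_bigr do rewrite mulr_sumr.
  under [RHS]eq_bigr do rewrite rmorph_sum mulr_suml.
  rewrite exchange_big; apply: eq_bigr => t _; apply: eq_bigr => k _.
  by rewrite rmorphM mulrA.
exists w; split.
  case: (pselect (exists k, w k != 0)) => // H.
  have Hk : forall k, w k = 0.
    by move=> k; apply/eqP; apply/negPn/negP => nz; apply: H; exists k.
  have := Hw s0; rewrite big1; last by move=> k _; rewrite Hk mulr0.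
  by move/esym/eqP; rewrite mulf_eq0 (negbTE xi0) (negbTE vs0).
move=> j.
under eq_bigr do rewrite rmorph_sum mulr_suml.
rewrite exchange_big /=.
transitivity (\sum_s ((U j s)%:C%C * (xi * v s))).
  apply: eq_bigr => s _; rewrite -Hw mulr_sumr; apply: eq_bigr => k _.
  by rewrite rmorphM mulrA.
by rewrite /w mulr_sumr; apply: eq_bigr => s _; rewrite mulrCA.
Qed.

Definition gapset (S : finType) (P : S -> S -> R) : set R :=
  (fun r : R => exists xi : R[i],
             [/\ is_eigenvalue P xi, xi != 1 & r = Normc.normc xi]).

Lemma gapset_ge0 (S : finType) (P : S -> S -> R) x : gapset P x -> 0 <= x.
Proof. by move=> [xi [_ _ ->]]; case: xi => a b /=; rewrite sqrtr_ge0. Qed.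

Lemma sup0U (S : set R) : (forall x, S x -> 0 <= x) -> sup ([set 0] `|` S) = sup S.
Proof.
move=> S0.
case: (pselect (has_sup S)) => hs.
  by apply: sup_setU => // a b -> Sb; apply: S0.
rewrite (sup_out hs).
case: (pselect (S !=set0)) => ne.
  apply: sup_out => -[_ [u ubu]]; apply: hs; split => //; exists u => x Sx.
  by apply: ubu; right.
have -> : S = set0 by apply/eqP/negPn/negP => /set0P.
by rewrite setU0 sup1.
Qed.

Lemma gapset_sub (S1 S2 : finType) (T : S1 -> S2 -> R) (U : S2 -> S1 -> R) :
  [set 0] `|` gapset (fun s t => \sum_k T s k * U k t) `<=`
  [set 0] `|` gapset (fun a b => \sum_k U a k * T k b).
Proof.
move=> x [->|[xi [Hxi H1 ->]]]; first by left.
have [->|xi0] := eqVneq xi 0; first by left; rewrite Normc.normc0.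
by right; exists xi; split => //; apply: eig_swap.
Qed.

Lemma gap_swap (S1 S2 : finType) (T : S1 -> S2 -> R) (U : S2 -> S1 -> R) :
  spectral_gap (fun s t => \sum_k T s k * U k t) =
  spectral_gap (fun a b => \sum_k U a k * T k b).
Proof.
rewrite /spectral_gap.
have := sup0U (@gapset_ge0 _ (fun s t => \sum_k T s k * U k t)).
have := sup0U (@gapset_ge0 _ (fun a b => \sum_k U a k * T k b)).
rewrite /gapset => <- <-.
congr (1 - sup _).
by rewrite eqEsubset; split; apply: gapset_sub.
Qed.

End Gen.

Theorem lemma2p6 (R : realType) (V E : finType) (eu ev : E -> V)
  (q : nat) (beta p : R) :
  simple_graph eu ev -> (0 < q)%N -> 0 <= beta -> p = 1 - expR (- beta) ->
  spectral_gap (fun sigma tau : {ffun V -> 'I_q} => P_SW eu ev p sigma tau) =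
  spectral_gap (fun A B : {set E} => P_SW_RC eu ev q p A B).
Proof.
move=> _ _ _ _.
pose T (s : {ffun V -> 'I_q}) (A : {set E}) : R :=
  (1 - p) ^+ #|mono_edges eu ev s| * (p / (1 - p)) ^+ #|A| *
  (A \subset mono_edges eu ev s)%:R.
pose U (A : {set E}) (s : {ffun V -> 'I_q}) : R :=
  q%:R ^- ncomp eu ev A * (A \subset mono_edges eu ev s)%:R.
have E1 : (fun sigma tau => P_SW eu ev p sigma tau) =
          (fun s t => \sum_k T s k * U k t).
  apply/funext => s; apply/funext => t.
  rewrite /P_SW big_mkcond mulr_sumr; apply: eq_bigr => A _.
  rewrite /T /U finset.subsetI.
  case: (A \subset _); case: (A \subset _); rewrite /= ?mulr0 ?mul0r //.
  by rewrite !mulr1 mulrA.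
have E2 : (fun A B => P_SW_RC eu ev q p A B) =
          (fun a b => \sum_k U a k * T k b).
  apply/funext => A; apply/funext => B.
  rewrite /P_SW_RC mulr_sumr; apply: eq_bigr => s _.
  rewrite /T /U finset.subUset.
  case: (A \subset _); case: (B \subset _); rewrite /= ?mulr0 ?mul0r //.
  by rewrite !mulr1 -mulrA (mulrC (_ ^+ #|B|)).
by rewrite E1 E2 gap_swap.
Qed.
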